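(* Let $\mathbb K$ be $\mathbb R$ or $\mathbb C$, let $A=A_0\oplus A_1$ be a commutative associative superalgebra over $\mathbb K$ (so $xy=(-1)^{|x||y|}yx$ for homogeneous $x,y$), and let $\delta:A\to A$ be an odd derivation of $A$, i.e. $\delta$ is linear, $|\delta(x)|=|x|+1$ and $\delta(xy)=\delta(x)y+(-1)^{|x|}x\,\delta(y)$ for homogeneous $x,y\in A$. Let $\mathfrak D^\delta=\{x\cdot\delta : x\in A\}$, where $x\cdot\delta$ is the map $y\mapsto x\,\delta(y)$; it is a super vector space with $|x\cdot\delta|=|x|+1$, so $\mathfrak D^\delta_0=\{x\cdot\delta: x\in A_1\}$ and $\mathfrak D^\delta_1=\{x\cdot\delta : x\in A_0\}$, and it is a left $A$-supermodule via $z\cdot(x\cdot\delta)=(zx)\cdot\delta$. Define the bilinear bracket on $\mathfrak D^\delta$ by $$\{X,Y\}=\big(x\,\delta(y)+(-1)^{(|x|+1)(|y|+1)}\,y\,\delta(x)\big)\cdot\delta,\qquad X=x\cdot\delta,\ Y=y\cdot\delta,$$ for homogeneous $x,y$, extended bilinearly. Then: (1) $(\mathfrak D^\delta_0,\{\,,\,\})$ is a Jordan algebra, i.e. the bracket is commutative on $\mathfrak D^\delta_0$ and $\{\{X,X\},\{Y,X\}\}=\{\{\{X,X\},Y\},X\}$ for all $X,Y\in\mathfrak D^\delta_0$. (2) If moreover $\delta^2=0$, then the bracket makes $\mathfrak D^\delta_1$ a Jordan module over $\mathfrak D^\delta_0$: for $X\in\mathfrak D^\delta_0$, $Y\in\mathfrak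 D^\delta_1$ one has $\{X,Y\}=\{Y,X\}$, and $\mathfrak D^\delta_0\oplus\mathfrak D^\delta_1$ with the product $(X_0,X_1).(Y_0,Y_1)=(\{X_0,Y_0\},\{X_0,Y_1\}+\{X_1,Y_0\})$ is a Jordan algebra. (3) For all homogeneous $z\in A$ and homogeneous $X,Y\in\mathfrak D^\delta$, $$2\,z\cdot\{X,Y\}=\{z\cdot X,Y\}+(-1)^{|z||X|}\{X,z\cdot Y\}.$$
   Context: A Jordan algebra is a commutative (not necessarily associative) algebra $(J,\circ)$ satisfying $(x\circ x)\circ(y\circ x)=((x\circ x)\circ y)\circ x$ for all $x,y\in J$. Parities $|\cdot|$ are taken in $\mathbb Z_2$ and all identities are stated for homogeneous elements. *)

(* Defs.v *)
From mathcomp Require Import all_boot all_algebra.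
From mathcomp Require Import complex.
From mathcomp Require Import Rstruct.
From Stdlib Require Import Reals.

Set Implicit Arguments.
Unset Strict Implicit.
Unset Printing Implicit Defensive.

Import GRing.Theory.
Local Open Scope ring_scope.

Section SuperDefs.
Variable K : fieldType.
Variable A : lmodType K.

(* A Z/2-grading A = A_0 (+) A_1 given by the two projections pi false, pi true. *)
Definition grading (pi : bool -> A -> A) : Prop :=
  [/\ (forall b (a : K) (x y : A), pi b (a *: x + y) = a *: pi b x + pi b y),
      (forall x, pi false x + pi true x = x) &
      (forall b c x, pi b (pi c x) = if b == c then pi c x else 0)].

(* x is homogeneous of parity b (false = even, true = odd). *)
Definition homog (pi : bool -> A -> A) (b : bool) (x : A) : Prop := pi b x = x.

Definition sgn (b : bool) : K := if b then -1 else 1.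

Definition comm_assoc_superalgebra (pi : bool -> A -> A) (mul : A -> A -> A) : Prop :=
  grading pi /\
  [/\ (forall (a : K) x y z, mul (a *: x + y) z = a *: mul x z + mul y z),
      (forall (a : K) x y z, mul z (a *: x + y) = a *: mul z x + mul z y),
      (forall b c x y, homog pi b x -> homog pi c y -> homog pi (b (+) c) (mul x y)),
      (forall x y z, mul x (mul y z) = mul (mul x y) z) &
      (forall b c x y, homog pi b x -> homog pi c y ->
                       mul x y = sgn (b && c) *: mul y x)].

Definition odd_derivation (pi : bool -> A -> A) (mul : A -> A -> A)
    (delta : A -> A) : Prop :=
  [/\ (forall (a : K) x y, delta (a *: x + y) = a *: delta x + delta y),
      (forall b x, homog pi b x -> homog pi (~~ b) (delta x)) &
      (forall b c x y, homog pi b x -> homog pi c y ->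
         delta (mul x y) = mul (delta x) y + sgn b *: mul x (delta y))].

Definition Dop (mul : A -> A -> A) (delta : A -> A) (x : A) : A -> A :=
  fun y => mul x (delta y).

(* Representative of {x.delta, y.delta} for x of parity b and y of parity c:
   x delta(y) + (-1)^{(|x|+1)(|y|+1)} y delta(x). *)
Definition br (mul : A -> A -> A) (delta : A -> A) (b c : bool) (x y : A) : A :=
  mul x (delta y) + sgn (~~ b && ~~ c) *: mul y (delta x).

(* Product on D_0 (+) D_1, on pairs of representatives (x0, x1) with
   x0 odd (so x0.delta in D_0) and x1 even (so x1.delta in D_1):
   (X0,X1).(Y0,Y1) = ({X0,Y0}, {X0,Y1} + {X1,Y0}). *)
Definition pmul (mul : A -> A -> A) (delta : A -> A) (X Y : A * A) : A * A :=
  (br mul delta true true X.1 Y.1,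
   br mul delta true false X.1 Y.2 + br mul delta false true X.2 Y.1).

Definition Deq (mul : A -> A -> A) (delta : A -> A) (X Y : A * A) : Prop :=
  Dop mul delta X.1 = Dop mul delta Y.1 /\ Dop mul delta X.2 = Dop mul delta Y.2.

End SuperDefs.

Definition theorem5_for (K : fieldType) : Prop :=
  forall (A : lmodType K) (pi : bool -> A -> A) (mul : A -> A -> A) (delta : A -> A),
  comm_assoc_superalgebra pi mul ->
  odd_derivation pi mul delta ->
  let D := Dop mul delta in
  let brk := br mul delta in
  (forall x y, homog pi true x -> homog pi true y ->
     D (brk true true x y) = D (brk true true y x) /\
     D (brk true true (brk true true x x) (brk true true y x)) =
     D (brk true true (brk true true (brk true true x x) y) x))
  /\
  ((forall x, delta (delta x) = 0) ->
     (forall x y, homog pi true x -> homog pi false y ->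
        D (brk true false x y) = D (brk false true y x))
     /\
     (forall X Y : A * A,
        homog pi true X.1 -> homog pi false X.2 ->
        homog pi true Y.1 -> homog pi false Y.2 ->
        Deq mul delta (pmul mul delta X Y) (pmul mul delta Y X) /\
        Deq mul delta
          (pmul mul delta (pmul mul delta X X) (pmul mul delta Y X))
          (pmul mul delta (pmul mul delta (pmul mul delta X X) Y) X)))
  /\
  (* (3) 2 z.{X,Y} = {z.X, Y} + (-1)^{|z||X|} {X, z.Y}, with |X| = |x|+1 *)
  (forall (bz b c : bool) (z x y : A),
     homog pi bz z -> homog pi b x -> homog pi c y ->
     D (2%:R *: mul z (brk b c x y)) =
     D (brk (bz (+) b) c (mul z x) y
        + sgn K (bz && ~~ b) *: brk b (bz (+) c) x (mul z y))).

(* Main.v *)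
Require Import Defs.
From mathcomp Require Import all_boot all_algebra.
From mathcomp Require Import complex.
From mathcomp Require Import Rstruct.
From Stdlib Require Import Reals.
Set Implicit Arguments. Unset Strict Implicit. Unset Printing Implicit Defensive.
Import GRing.Theory. Local Open Scope ring_scope.

Inductive term := TAt of nat | TAdd of term & term | TOpp of term
 | TSc of int & term | TMul of term & term | TDel of term.

Definition atom := (nat * nat)%type.
Definition mono := (atom * seq atom)%type.
Definition spoly := seq (int * mono).

Definition isg (b : bool) : int := if b then -1 else 1.

Section Comb.
Variable par : seq bool.
Definition apar (a : atom) := nth false par a.1 (+) odd a.2.
Definition leA (a h : atom) := ltn a.1 h.1 || ((a.1 == h.1) && leq a.2 h.2).

Definition catm (m1 m2 : mono) : mono := (m1.1, m1.2 ++ m2.1 :: m2.2).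
Definition scalep (c : int) (p : spoly) : spoly := map (fun d => (c * d.1, d.2)) p.
Definition mulp (p q : spoly) : spoly :=
  [seq (c.1 * d.1, catm c.2 d.2) | c <- p, d <- q].
Definition datom (a : atom) : atom := (a.1, a.2.+1).
Fixpoint dm (a : atom) (l : seq atom) : spoly :=
  match l with
  | [::] => [:: (1, (datom a, [::]))]
  | b :: l' => (1, (datom a, b :: l')) ::
       map (fun d => (d.1 * isg (apar a), (a, d.2.1 :: d.2.2))) (dm b l')
  end.
Fixpoint pdel (p : spoly) : spoly :=
  match p with
  | [::] => [::]
  | (c, (a, l)) :: p' => scalep c (dm a l) ++ pdel p'
  end.
Fixpoint norm (t : term) : spoly :=
  match t with
  | TAt i => [:: (1, ((i, O), [::]))]
  | TAdd u v => norm u ++ norm v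
  | TOpp u => scalep (-1) (norm u)
  | TSc z u => scalep z (norm u)
  | TMul u v => mulp (norm u) (norm v)
  | TDel u => pdel (norm u)
  end.
Fixpoint ins (a h : atom) (t : seq atom) : int * mono :=
  if (a == h) && apar a then (0, (h, t)) else
  if leA a h then (1, (a, h :: t)) else
  match t with
  | [::] => (isg (apar a && apar h), (h, [:: a]))
  | c :: t' => let r := ins a c t' in
      (isg (apar a && apar h) * r.1, (h, r.2.1 :: r.2.2))
  end.
Fixpoint sortm (a : atom) (l : seq atom) : int * mono :=
  match l with
  | [::] => (1, (a, [::]))
  | b :: l' => let r := sortm b l' in let r2 := ins a r.2.1 r.2.2 in
      (r.1 * r2.1, r2.2)
  end.
Definition prep (nil2 : bool) (p : spoly) : spoly :=
  foldr (fun cm acc => let r := sortm cm.2.1 cm.2.2 in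
     if (r.1 == 0) || (nil2 && has (fun x => leq 2 x.2) (r.2.1 :: r.2.2))
     then acc else (cm.1 * r.1, r.2) :: acc) [::] p.
Fixpoint addcm (cm : int * mono) (p : spoly) : spoly :=
  match p with
  | [::] => [:: cm]
  | dm' :: p' => if cm.2 == dm'.2 then (cm.1 + dm'.1, dm'.2) :: p'
                 else dm' :: addcm cm p'
  end.
Definition collect (p : spoly) : spoly := foldr addcm [::] p.
Definition check nil2 (t1 t2 : term) :=
  all (fun cm => cm.1 == 0) (collect (prep nil2 (norm t1 ++ scalep (-1) (norm t2)))).
End Comb.

Section Sound.
Variable K : fieldType.
Variable A : lmodType K.
Variables (pi : bool -> A -> A) (mul : A -> A -> A) (delta : A -> A).
Hypothesis HS : comm_assoc_superalgebra pi mul.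
Hypothesis HD : odd_derivation pi mul delta.
Hypothesis H2 : (2%:R : K) != 0.

Lemma zero_of (u : A) : u = u + u -> u = 0.
Proof. by move=> h; apply/esym/(@addrI _ u); rewrite addr0 {1}h. Qed.

Lemma homog0 b : homog pi b 0.
Proof.
case: HS => [[lin _ _] _]; rewrite /homog; apply: zero_of.
by rewrite -{1}(addr0 0) -{1}(scale1r 0) lin scale1r.
Qed.

Lemma mul0l z : mul 0 z = 0.
Proof. case: HS => _ [ll _ _ _ _]; apply: zero_of.
by rewrite -{1}(addr0 0) -{1}(scale1r 0) ll scale1r. Qed.
Lemma mul0r z : mul z 0 = 0.
Proof. case: HS => _ [_ lr _ _ _]; apply: zero_of.
by rewrite -{1}(addr0 0) -{1}(scale1r 0) lr scale1r. Qed.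
Lemma mulDl u v z : mul (u + v) z = mul u z + mul v z.
Proof. case: HS => _ [ll _ _ _ _]; by rewrite -{1}(scale1r u) ll scale1r. Qed.
Lemma mulDr u v z : mul z (u + v) = mul z u + mul z v.
Proof. case: HS => _ [_ lr _ _ _]; by rewrite -{1}(scale1r u) lr scale1r. Qed.
Lemma mulZl a u z : mul (a *: u) z = a *: mul u z.
Proof. case: HS => _ [ll _ _ _ _]; by rewrite -(addr0 (a *: u)) ll mul0l addr0. Qed.
Lemma mulZr a u z : mul z (a *: u) = a *: mul z u.
Proof. case: HS => _ [_ lr _ _ _]; by rewrite -(addr0 (a *: u)) lr mul0r addr0. Qed.
Lemma mulA u v w : mul u (mul v w) = mul (mul u v) w.
Proof. by case: HS => _ [_ _ _ ->]. Qed.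
Lemma del0 : delta 0 = 0.
Proof. case: HD => lin _ _; apply: zero_of.
by rewrite -{1}(addr0 0) -{1}(scale1r 0) lin scale1r. Qed.
Lemma delD u v : delta (u + v) = delta u + delta v.
Proof. case: HD => lin _ _; by rewrite -{1}(scale1r u) lin scale1r. Qed.
Lemma delZ a u : delta (a *: u) = a *: delta u.
Proof. case: HD => lin _ _; by rewrite -(addr0 (a *: u)) lin del0 addr0. Qed.

Lemma isgE b : (isg b)%:~R = sgn K b.
Proof. by case: b. Qed.

Lemma swap pa ph u v w : homog pi pa u -> homog pi ph v ->
  mul u (mul v w) = sgn K (pa && ph) *: mul v (mul u w).
Proof.
move=> hu hv; case: HS => _ [_ _ _ _ cm].
by rewrite !mulA (cm _ _ _ _ hu hv) mulZl.
Qed.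

Lemma oddsq u : homog pi true u -> mul u u = 0.
Proof.
move=> hu; case: HS => _ [_ _ _ _ cm].
have h := cm _ _ _ _ hu hu; rewrite /= scaleN1r in h.
have : (2%:R : K) *: mul u u = 0 by rewrite scaler_nat mulr2n {1}h addNr.
by move/eqP; rewrite scaler_eq0 (negbTE H2) => /eqP.
Qed.

Variable env : seq A.
Variable par : seq bool.
Hypothesis Henv : forall i, homog pi (nth false par i) (nth 0 env i).

Definition atomv (a : atom) := iter a.2 delta (nth 0 env a.1).
Lemma homog_atom a : homog pi (apar par a) (atomv a).
Proof.
case: a => i k; rewrite /apar /atomv /=; elim: k => [|k IH] /=.
  by rewrite addbF.
case: HD => _ hd _; rewrite addbN; exact: hd.
Qed.

Fixpoint evalm0 (a : atom) (l : seq atom) : A :=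
  match l with [::] => atomv a | b :: l' => mul (atomv a) (evalm0 b l') end.
Fixpoint mpar0 (a : atom) (l : seq atom) : bool :=
  match l with [::] => apar par a | b :: l' => apar par a (+) mpar0 b l' end.
Lemma homog_m a l : homog pi (mpar0 a l) (evalm0 a l).
Proof.
elim: l a => [|b l IH] a /=; first exact: homog_atom.
case: HS => _ [_ _ hm _ _]; apply: hm; [exact: homog_atom | exact: IH].
Qed.
Definition evalm (m : mono) := evalm0 m.1 m.2.
Fixpoint evalp (p : spoly) : A :=
  match p with [::] => 0 | cm :: p' => cm.1%:~R *: evalm cm.2 + evalp p' end.

Lemma evalp_cat p q : evalp (p ++ q) = evalp p + evalp q.
Proof. by elim: p => [|c p IH] /=; rewrite ?add0r // IH addrA. Qed.
Lemma evalp_scale c p : evalp (scalep c p) = c%:~R *: evalp p.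
Proof.
elim: p => [|d p IH] /=; first by rewrite scaler0.
by rewrite IH scalerDr intrM scalerA.
Qed.
Lemma evalm0_cat a l b l' :
  evalm0 a (l ++ b :: l') = mul (evalm0 a l) (evalm0 b l').
Proof. elim: l a => [|c l IH] a //=; by rewrite IH mulA. Qed.
Lemma evalp_mul1 c q : evalp [seq (c.1 * d.1, catm c.2 d.2) | d <- q] =
  mul (c.1%:~R *: evalm c.2) (evalp q).
Proof.
elim: q => [|d q IHq] /=; first by rewrite mul0r.
by rewrite IHq mulDr /evalm /catm /= evalm0_cat !mulZl !mulZr scalerA intrM.
Qed.
Lemma evalp_mul p q : evalp (mulp p q) = mul (evalp p) (evalp q).
Proof.
elim: p => [|c p IH] /=; first by rewrite mul0l.
by rewrite evalp_cat IH mulDl evalp_mul1.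
Qed.

Lemma evalp_pre a s q :
  evalp (map (fun d => (d.1 * s, (a, d.2.1 :: d.2.2))) q) =
  s%:~R *: mul (atomv a) (evalp q).
Proof.
elim: q => [|d q IH] /=; first by rewrite mul0r scaler0.
rewrite IH mulDr scalerDr mulZr scalerA intrM mulrC; congr (_ + _).
Qed.

Lemma dm_ok a l : evalp (dm par a l) = delta (evalm0 a l).
Proof.
elim: l a => [|b l IH] a /=; first by rewrite scale1r addr0.
rewrite scale1r evalp_pre IH isgE.
case: HD => _ _ hl; by rewrite (hl _ _ _ _ (homog_atom a) (homog_m b l)).
Qed.

Lemma pdel_ok p : evalp (pdel par p) = delta (evalp p).
Proof.
elim: p => [|[c [a l]] p IH] /=; first by rewrite del0.
by rewrite evalp_cat evalp_scale dm_ok IH delD delZ.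
Qed.

Fixpoint evalt (t : term) : A :=
  match t with
  | TAt i => nth 0 env i
  | TAdd u v => evalt u + evalt v
  | TOpp u => - evalt u
  | TSc z u => z%:~R *: evalt u
  | TMul u v => mul (evalt u) (evalt v)
  | TDel u => delta (evalt u)
  end.

Lemma norm_ok t : evalp (norm par t) = evalt t.
Proof.
elim: t => [i|u IHu v IHv|u IHu|z u IHu|u IHu v IHv|u IHu] /=.
- by rewrite scale1r addr0.
- by rewrite evalp_cat IHu IHv.
- by rewrite evalp_scale IHu scaleN1r.
- by rewrite evalp_scale IHu.
- by rewrite evalp_mul IHu IHv.
- by rewrite pdel_ok IHu.
Qed.

Lemma ins_ok a h t :
  (ins par a h t).1%:~R *: evalm (ins par a h t).2 = mul (atomv a) (evalm0 h t).
Proof.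
elim: t h => [|c t IH] h /=.
  case: ifP => [/andP[/eqP <- pa]|_]; first by rewrite scale0r oddsq // -pa; exact: homog_atom.
  case: ifP => _; first by rewrite scale1r.
  rewrite /evalm /= isgE.
  case: HS => _ [_ _ _ _ cm]; rewrite (cm _ _ _ _ (homog_atom a) (homog_atom h)) //.
case: ifP => [/andP[/eqP <- pa]|_].
  rewrite scale0r mulA oddsq ?mul0l // -pa; exact: homog_atom.
case: ifP => _; first by rewrite scale1r.
rewrite /evalm /= intrM -scalerA -mulZr.
have := IH c; rewrite /evalm => ->.
by rewrite isgE (swap _ (homog_atom a) (homog_atom h)).
Qed.

Lemma sortm_ok a l : (sortm par a l).1%:~R *: evalm (sortm par a l).2 = evalm0 a l.
Proof.
elim: l a => [|b l IH] a /=; first by rewrite scale1r.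
by rewrite intrM -scalerA ins_ok -[evalm0 b l]IH mulZr.
Qed.

Lemma evalm0_zero (Hn : forall x, delta (delta x) = 0) a l : has (fun x => leq 2 x.2) (a :: l) -> evalm0 a l = 0.
Proof.
have za (b : atom) : leq 2 b.2 -> atomv b = 0.
  case: b => i [|[|k]] //= _; exact: Hn.
elim: l a => [|b l IH] a /=; first by rewrite orbF; exact: za.
case/orP => [/za ->|h]; first by rewrite mul0l.
by rewrite IH // mul0r.
Qed.

Lemma prep_ok (nil2 : bool) (Hn : nil2 -> forall x, delta (delta x) = 0) p :
  evalp (prep par nil2 p) = evalp p.
Proof.
elim: p => [|[c [a l]] p IH] //=.
have so := sortm_ok a l.
case: ifP => [/orP[/eqP r0|/andP[n2 hz]]|_].
- by rewrite IH /evalm /= -so r0 scale0r scaler0 add0r.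
- have := evalm0_zero (Hn n2) hz => ez.
  by rewrite IH /evalm /= -so /evalm ez scaler0 scaler0 add0r.
- by rewrite /= IH /evalm /= -so intrM -scalerA.
Qed.

Lemma addc_ok (cm : int * mono) (p : spoly) : evalp (addcm cm p) = cm.1%:~R *: evalm cm.2 + evalp p.
Proof.
elim: p => [|d p IH] /=; first by [].
case: ifP => [/eqP ->|_] /=; first by rewrite intrD scalerDl addrA.
by rewrite IH addrCA.
Qed.

Lemma collect_ok (p : spoly) : evalp (collect p) = evalp p.
Proof. elim: p => [|d p IH] //=; by rewrite addc_ok IH. Qed.

Lemma all0_ok (p : spoly) : all (fun cm => cm.1 == 0) p -> evalp p = 0.
Proof.
elim: p => [|d p IH] //= /andP[/eqP -> h]; by rewrite scale0r add0r IH.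
Qed.

Lemma check_ok (nil2 : bool) (Hn : nil2 -> forall x, delta (delta x) = 0) t1 t2 :
  check par nil2 t1 t2 -> evalt t1 = evalt t2.
Proof.
move=> /all0_ok; rewrite collect_ok prep_ok // evalp_cat evalp_scale !norm_ok.
by rewrite scaleN1r => /subr0_eq.
Qed.
End Sound.

Fixpoint envP (K : fieldType) (A : lmodType K) (pi : bool -> A -> A)
  (env : seq A) (par : seq bool) : Prop :=
  match env, par with
  | x :: e, b :: ps => @homog K A pi b x /\ @envP K A pi e ps
  | [::], [::] => True
  | _, _ => False
  end.

Lemma envP_ok (K : fieldType) (A : lmodType K) (pi : bool -> A -> A) (mul : A -> A -> A)
  (HS : comm_assoc_superalgebra pi mul) (env : seq A) (par : seq bool) :
  envP pi env par -> forall i, homog pi (nth false par i) (nth 0 env i).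
Proof.
elim: env par => [|x e IH] [|b ps] //=.
- by move=> _ i; rewrite !nth_nil; exact: (homog0 HS).
- by case=> hx he [|i] //=; exact: IH.
Qed.

Lemma Dcong (K : fieldType) (A : lmodType K) (mul : A -> A -> A) delta u v :
  u = v -> Dop mul delta u = Dop mul delta v.
Proof. by move=> ->. Qed.

Ltac lookup t l :=
  lazymatch l with
  | (t :: _) => constr:(O)
  | (_ :: ?l') => let n := lookup t l' in constr:(S n)
  end.

Ltac reify mul delta env t :=
  lazymatch t with
  | @GRing.add _ ?u ?v => let a := reify mul delta env u in let b := reify mul delta env v in
               constr:(TAdd a b)
  | @GRing.opp _ ?u => let a := reify mul delta env u in constr:(TOpp a)
  | @GRing.scale _ _ (@GRing.natmul _ _ ?n) ?u => let a := reify mul delta env u in constr:(TSc (Posz n) a)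
  | mul ?u ?v => let a := reify mul delta env u in let b := reify mul delta env v in
               constr:(TMul a b)
  | delta ?u => let a := reify mul delta env u in constr:(TDel a)
  | _ => let i := lookup t env in constr:(TAt i)
  end.

Ltac solve_eq HS HD H2 env par nil2 Hn :=
  lazymatch type of HS with comm_assoc_superalgebra ?pi ?mul =>
  lazymatch type of HD with odd_derivation _ _ ?delta =>
  lazymatch goal with |- ?L = ?R =>
    let tl := reify mul delta env L in
    let tr := reify mul delta env R in
    let HE := fresh "HE" in
    assert (HE : envP pi env par) by (simpl; repeat split; assumption);
    apply: (@check_ok _ _ pi mul delta HS HD H2 env par (envP_ok HS HE) nil2 Hn tl tr);
    vm_compute; reflexivity
  end end end.

Lemma main (K : fieldType) (H2 : (2%:R : K) != 0) : theorem5_for K.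
Proof.
move=> A pi mul delta HS HD D brk.
rewrite {}/D {}/brk.
have Hf : false -> forall x, delta (delta x) = 0 by [].
split; [|split].
- move=> x y hx hy; split; apply: Dcong; rewrite /br /sgn /= ?scale1r ?scaleN1r.
    by rewrite addrC.
  solve_eq HS HD H2 [:: x; y] [:: true; true] false Hf.
- move=> Hn; have Ht : true -> forall x, delta (delta x) = 0 by [].
  split.
    move=> x y hx hy; apply: Dcong; rewrite /br /sgn /= ?scale1r ?scaleN1r.
    by rewrite addrC.
  case=> x0 x1 [y0 y1] /= hx0 hx1 hy0 hy1.
  rewrite /Deq /pmul /br /sgn /=; split; split; apply: Dcong;
    rewrite ?scale1r ?scaleN1r;
    solve_eq HS HD H2 [:: x0; x1; y0; y1] [:: true; false; true; false] true Ht.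
- move=> bz b c z x y hz hx hy; apply: Dcong.
  case: bz hz; case: b hx; case: c hy => hy hx hz;
  rewrite /br /sgn /= ?scale1r ?scaleN1r;
  match goal with hz : homog _ ?bz z, hx : homog _ ?b x, hy : homog _ ?c y |- _ =>
    solve_eq HS HD H2 [:: z; x; y] [:: bz; b; c] false Hf end.
Qed.
From mathcomp Require Import ssrnum.
Import Num.Theory.
Theorem theorem5 : theorem5_for Rdefinitions.R /\ theorem5_for (Rdefinitions.R)[i].
Proof. by split; apply: main; rewrite pnatr_eq0. Qed.
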